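(* Let $r>0$ and let $\mathcal D=\{({\bm{x}}_i,y_i)\}_{i=1}^n$, ${\bm{x}}_i\in\mathbb{R}^d$, $y_i\in[K]$, be a dataset that is $r$-separated with respect to the $\ell_\infty$-norm. Then there exists a two-layer $\ell_\infty$-distance net ${\bm{g}}:\mathbb{R}^d\to\mathbb{R}^K$ with hidden size $n$ such that the margin-based certified $\ell_\infty$ robust accuracy on $\mathcal D$ under perturbation $\epsilon=r$ is $100\%$, i.e. $\mathsf{margin}({\bm{x}}_i,y_i;{\bm{g}})/2>r$ for every $i\in[n]$.
   Context: $r$-separation: $\mathcal D$ is $r$-separated w.r.t. $\ell_\infty$ if for all $i,j$ with $y_i\neq y_j$ one has $\|{\bm{x}}_i-{\bm{x}}_j\|_\infty>2r$. An $L$-layer $\ell_\infty$-distance net ${\bm{g}}$ with input ${\bm{x}}^{(0)}={\bm{x}}$ computes $x^{(l)}_i=\|{\bm{x}}^{(l-1)}-{\bm{w}}^{(l,i)}\|_\infty+b^{(l)}_i$ ($l\in[L]$, $i\in[n_l]$, arbitrary real parameters), with $n_L=K$ and ${\bm{g}}({\bm{x}})={\bm{x}}^{(L)}$; ''hidden size'' is the width $n_l$ of the hidden layers $l<L$. The output margin is $\mathsf{margin}({\bm{x}},y;{\bm{g}})=[{\bm{g}}({\bm{x}})]_y-\max_{j\neq y}[{\bm{g}}({\bm{x}})]_j$. Margin-based certification declares the labeled point $({\bm{x}},y)$ certifiably robust at level $\epsilon$ iff $\mathsf{margin}({\bm{x}},y;{\bm{g}})/2>\epsilon$. *)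

(* Defs.v *)
From HB Require Import structures.
From mathcomp Require Import all_boot all_order all_algebra.
From mathcomp Require Import reals constructive_ereal.
Set Implicit Arguments. Unset Strict Implicit. Unset Printing Implicit Defensive.
Import Order.TTheory GRing.Theory Num.Theory.
Local Open Scope ring_scope.

Definition linf (R : realType) (d : nat) (v : 'I_d -> R) : R :=
  \big[Num.max/0]_(i < d) `|v i|.

Definition vsub (R : realType) (d : nat) (u v : 'I_d -> R) : 'I_d -> R :=
  fun i => u i - v i.

Definition r_separated (R : realType) (d n K : nat)
    (x : 'I_n -> ('I_d -> R)) (y : 'I_n -> 'I_K) (r : R) : Prop :=
  forall i j : 'I_n, y i != y j -> 2 * r < linf (vsub (x i) (x j)).

Definition dist_layer (R : realType) (m p : nat)
    (w : 'I_p -> ('I_m -> R)) (b : 'I_p -> R) (u : 'I_m -> R) : 'I_p -> R :=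
  fun k => linf (vsub u (w k)) + b k.

Definition two_layer_net (R : realType) (d h K : nat)
    (w1 : 'I_h -> ('I_d -> R)) (b1 : 'I_h -> R)
    (w2 : 'I_K -> ('I_h -> R)) (b2 : 'I_K -> R) (u : 'I_d -> R) : 'I_K -> R :=
  dist_layer w2 b2 (dist_layer w1 b1 u).

(* margin(x,y;g) = g(x)_y - max_{j <> y} g(x)_j, in the extended reals
   (the max over an empty set of classes is -oo). *)
Definition margin (R : realType) (d K : nat) (g : ('I_d -> R) -> 'I_K -> R)
    (u : 'I_d -> R) (c : 'I_K) : \bar R :=
  ((g u c)%:E - \big[maxe/-oo%E]_(j < K | j != c) (g u j)%:E)%E.

(* Main.v *)
Require Import Defs.
From HB Require Import structures.
From mathcomp Require Import all_boot all_order all_algebra.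
From mathcomp Require Import reals constructive_ereal.
From mathcomp Require Import lra.
Import Order.TTheory GRing.Theory Num.Theory.
Local Open Scope ring_scope.

Lemma linf_ge0 (R : realType) (d : nat) (v : 'I_d -> R) : 0 <= linf v.
Proof. by rewrite /linf; apply: (big_ind (fun z => 0 <= z)) => // a b ? ?; rewrite le_max; apply/orP; left. Qed.

Lemma linf_ge (R : realType) (d : nat) (v : 'I_d -> R) k : `|v k| <= linf v.
Proof. exact: le_bigmax. Qed.

Lemma linf_lt (R : realType) (d : nat) (v : 'I_d -> R) c :
  0 < c -> (forall k, `|v k| < c) -> linf v < c.
Proof. by move=> c0 h; apply: bigmax_lt. Qed.

Lemma linf_le (R : realType) (d : nat) (v : 'I_d -> R) c :
  0 <= c -> (forall k, `|v k| <= c) -> linf v <= c.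
Proof. by move=> c0 h; apply: bigmax_le. Qed.

Theorem mainTheorem4 (R : realType) (d n K : nat) (r : R)
    (x : 'I_n -> ('I_d -> R)) (y : 'I_n -> 'I_K) :
  0 < r -> r_separated x y r ->
  exists (w1 : 'I_n -> ('I_d -> R)) (b1 : 'I_n -> R)
         (w2 : 'I_K -> ('I_n -> R)) (b2 : 'I_K -> R),
    forall i : 'I_n,
      (r%:E < margin (two_layer_net w1 b1 w2 b2) (x i) (y i) * (2^-1)%:E)%E.
Proof.
move=> r0 sep.
pose D i j := linf (vsub (x i) (x j)).
pose B := \big[Num.max/0]_(i < n) \big[Num.max/0]_(j < n) D i j.
have DB i j : D i j <= B.
  apply: le_trans (le_bigmax _ _ i); exact: (le_bigmax _ (fun j => D i j) j).
have D0 i j : 0 <= D i j by apply: linf_ge0.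
have mx0 (a b : R) : 0 <= a -> 0 <= b -> 0 <= Num.max a b by move=> ? ?; rewrite le_max; apply/orP; left.
have B0 : 0 <= B.
  apply: (big_ind (fun z => 0 <= z)) => // k _.
  by apply: (big_ind (fun z => 0 <= z)) => // j _.
pose A := B + 2 * r + 1.
exists x, (fun _ => 0), (fun c j => if y j == c then A else 0), (fun _ => 0).
move=> i.
have H j : dist_layer x (fun _ => 0) (x i) j = D i j by rewrite /dist_layer addr0.
pose g := two_layer_net x (fun=> 0) (fun c j => if y j == c then A else 0) (fun=> 0).
have Gy : A <= g (x i) (y i).
  rewrite /g /two_layer_net /dist_layer addr0.
  refine (le_trans _ (linf_ge _ _ _ i)); rewrite /vsub eqxx /=.
  have -> : linf (vsub (x i) (x i)) + 0 = 0.
    rewrite addr0; apply/eqP; rewrite eq_le linf_ge0 andbT; apply: linf_le => // k.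
    by rewrite /vsub subrr normr0.
  by rewrite sub0r normrN ger0_norm // /A; lra.
have Gc c : c != y i -> g (x i) c < A - 2 * r.
  move=> cy; rewrite /g /two_layer_net /dist_layer addr0.
  apply: linf_lt; first by rewrite /A; lra.
  have B0' := B0.
  move=> j; rewrite {1}/vsub /= addr0 -/(D i j).
  case: eqP => [yjc|_].
    have : 2 * r < D i j by apply: sep; rewrite yjc eq_sym.
    have := DB i j; rewrite /A => ? ?.
    rewrite ler0_norm; last lra.
    lra.
  rewrite subr0 ger0_norm //; have := DB i j; rewrite /A; lra.
rewrite /margin -/g.
have : (\big[maxe/-oo%E]_(j < K | j != y i) (g (x i) j)%:E < (A - 2 * r)%:E)%E.
  by apply: bigmax_lt => [|j jy]; first exact: ltNyr; rewrite lte_fin; apply: Gc.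
case: (\big[maxe/-oo%E]_(j < K | j != y i) (g (x i) j)%:E) => [m| |] //.
  rewrite lte_fin => hm.
  rewrite -EFinD -EFinM lte_fin; lra.
move=> _; rewrite /= .
have h2 : (0%:E < (2^-1 : R)%:E)%E by rewrite lte_fin invr_gt0 ltr0n.
rewrite addey // (gt0_mulye h2); exact: ltry.
Qed.
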